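(* Let $G$ be a simple undirected graph on $\{1,\dots,n\}$ with adjacency $g_{ij}$ and degrees $d_i$. Let the exposure be binary, $e_i=I\big(\sum_jg_{ij}z_j>0\big)$, and suppose $Y_i(z_i,e_i)=\alpha_i+\beta_iz_i+\gamma_ie_i+\theta_iz_ie_i$. Under a completely randomized design with $n_t$ treated and $n_c=n-n_t$ control units, $1\le n_t\le n-1$, the estimator $$\hat\beta_{naive}=\frac{\sum_i Y_i^{obs}Z_i}{\sum_i Z_i}-\frac{\sum_i Y_i^{obs}(1-Z_i)}{\sum_i(1-Z_i)}$$ satisfies, with $\mathrm{DTE}=\frac1n\sum_i\big(Y_i(1,0)-Y_i(0,0)\big)$, $$\mathbb E[\hat\beta_{naive}]-\mathrm{DTE}=-\frac1n\sum_i\gamma_i\frac{\binom{n_c-1}{d_i-1}}{\binom{n-1}{d_i}}+\frac1n\sum_i\theta_i\left(1-\frac{\binom{n_c}{d_i}}{\binom{n-1}{d_i}}\right).$$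
   Context: Completely randomized design: $\mathbf Z$ is uniform over vectors in $\{0,1\}^n$ with exactly $n_t$ ones. $E_i=I(\sum_jg_{ij}Z_j>0)$, $Y_i^{obs}=Y_i(Z_i,E_i)$. Binomial coefficients follow the convention $\binom ab=0$ if $b<0$ or $b>a$. *)

(* Defs.v *)
From HB Require Import structures.
From mathcomp Require Import all_boot all_order all_algebra.
Set Implicit Arguments. Unset Strict Implicit. Unset Printing Implicit Defensive.
Import Order.TTheory GRing.Theory Num.Theory.
Local Open Scope ring_scope.

(* Binomial coefficient with integer lower index, convention binom a b = 0
   if b < 0 or b > a (upper index a is a natural number here). *)
Definition binomZ (a : nat) (b : int) : nat :=
  match b with Posz k => 'C(a, k) | Negz _ => 0%N end.

Definition simple_graph n (g : rel 'I_n) : Prop :=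
  (forall i j, g i j = g j i) /\ (forall i, g i i = false).

Definition deg n (g : rel 'I_n) (i : 'I_n) : nat := #|[set j | g i j]|.

Definition exposure n (g : rel 'I_n) (z : {ffun 'I_n -> bool}) (i : 'I_n) : bool :=
  (0 < \sum_(j < n) (g i j * z j)%N)%N.

Definition crd_support n (nt : nat) : {set {ffun 'I_n -> bool}} :=
  [set z : {ffun 'I_n -> bool} | #|[set i | z i]| == nt].

Definition Ypot (R : nzRingType) n (al be ga th : 'I_n -> R)
  (i : 'I_n) (zi ei : bool) : R :=
  al i + be i * zi%:R + ga i * ei%:R + th i * (zi && ei)%:R.

Definition Yobs (R : nzRingType) n (g : rel 'I_n) (al be ga th : 'I_n -> R)
  (z : {ffun 'I_n -> bool}) (i : 'I_n) : R :=
  Ypot al be ga th i (z i) (exposure g z i).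

Definition beta_naive (R : fieldType) n (g : rel 'I_n) (al be ga th : 'I_n -> R)
  (z : {ffun 'I_n -> bool}) : R :=
  (\sum_i Yobs g al be ga th z i * (z i)%:R) / (\sum_i (z i)%:R : R)
  - (\sum_i Yobs g al be ga th z i * (1 - (z i)%:R)) / (\sum_i (1 - (z i)%:R) : R).

Definition crd_expect (R : fieldType) n (nt : nat) (f : {ffun 'I_n -> bool} -> R) : R :=
  (\sum_(z in crd_support n nt) f z) / (#|crd_support n nt|)%:R.

Definition DTE (R : fieldType) n (al be ga th : 'I_n -> R) : R :=
  (n%:R)^-1 * \sum_i (Ypot al be ga th i true false - Ypot al be ga th i false false).

(* Main.v *)
Require Import Defs.
From HB Require Import structures.
From mathcomp Require Import all_boot all_order all_algebra.
From mathcomp Require Import zify ring lra.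
Import Order.TTheory GRing.Theory Num.Theory.
Set Implicit Arguments. Unset Strict Implicit.

Lemma cnt_in (T : finType) (A : {set T}) x k : x \in A ->
  #|[set S : {set T} | [&& S \subset A, #|S| == k.+1 & x \in S]]| = 'C(#|A|.-1, k).
Proof.
move=> xA.
have := cards_draws A k.+1.
rewrite -(cardsID [set S : {set T} | x \in S]).
have -> : [set S : {set T} | S \subset A & #|S| == k.+1] :\: [set S : {set T} | x \in S]
   = [set S : {set T} | S \subset A :\ x & #|S| == k.+1].
  apply/setP=> S; rewrite !inE; apply/idP/idP.
  - case/andP=> xS /andP[sA ->]; rewrite andbT; apply/subsetP=> y yS.
    by rewrite !inE (subsetP sA) // andbT; apply: contraNneq xS => <-.
  - case/andP=> sA ->; rewrite andbT.
    have xS : x \notin S by apply/negP=> /(subsetP sA); rewrite !inE eqxx.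
    rewrite xS /=; apply: subset_trans sA _; exact: subsetDl.
rewrite cards_draws.
have hA : #|A| = (#|A :\ x|).+1 by rewrite (cardsD1 x A) xA.
rewrite hA binS /= [RHS]addnC => /eqP; rewrite eqn_add2r => /eqP <-.
by apply: eq_card => S; rewrite !inE andbA.
Qed.

Lemma trin m d k : 'C(m, d) * 'C(m - d, k) = 'C(m, k) * 'C(m - k, d).
Proof.
have [le|lt] := leqP (d + k) m; last first.
  have [ldm|ldm] := leqP d m.
    have -> : 'C(m - d, k) = 0 by apply: bin_small; lia.
    have [lkm|lkm] := leqP k m.
      have -> : 'C(m - k, d) = 0 by apply: bin_small; lia.
      by rewrite !muln0.
    by rewrite muln0 (@bin_small m k).
  have -> : 'C(m - k, d) = 0 by apply: bin_small; lia.
  by rewrite muln0 (@bin_small m d).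
have F0 : 0 < d`! * k`! * (m - d - k)`! by rewrite !muln_gt0 !fact_gt0.
apply/eqP; rewrite -(eqn_pmul2r F0); apply/eqP.
have e1 : 'C(m, d) * 'C(m - d, k) * (d`! * k`! * (m - d - k)`!)
   = 'C(m, d) * (d`! * ('C(m - d, k) * (k`! * (m - d - k)`!))) by ring.
have e2 : 'C(m, k) * 'C(m - k, d) * (d`! * k`! * (m - d - k)`!)
   = 'C(m, k) * (k`! * ('C(m - k, d) * (d`! * (m - k - d)`!))).
  have -> : m - k - d = m - d - k by lia. ring.
rewrite e1 e2 !bin_fact //; try lia.
Qed.

Definition ffz n (S : {set 'I_n}) : {ffun 'I_n -> bool} := [ffun i => i \in S].

Lemma sum_supp (R : nzRingType) n nt (P : {ffun 'I_n -> bool} -> bool) :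
  (\sum_(z in crd_support n nt) (P z)%:R =
   (#|[set S : {set 'I_n} | (#|S| == nt) && P (ffz S)]|)%:R :> R)%R.
Proof.
rewrite (reindex (@ffz n)); last first.
  apply: onW_bij; exists (fun z : {ffun 'I_n -> bool} => [set i | z i]).
  - by move=> S; apply/setP=> i; rewrite inE ffunE.
  - by move=> z; apply/ffunP=> i; rewrite ffunE inE.
rewrite -sum1_card natr_sum [RHS]big_mkcond [LHS]big_mkcond /=.
apply: eq_bigr => S _.
have eS : [set i | ffz S i] = S by apply/setP=> i; rewrite inE ffunE.
rewrite !inE eS; by case: (_ == _); case: (P _).
Qed.

Lemma expo n (g : rel 'I_n) S i :
  exposure g (ffz S) i = ~~ (S \subset ~: [set j | g i j]).
Proof.
rewrite /exposure lt0n sum_nat_eq0; congr negb.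
apply/forallP/subsetP => [H j jS | H j]; rewrite ?inE.
  have := H j; rewrite ffunE jS muln1; by case: (g i j).
rewrite ffunE; case jS: (j \in S); last by rewrite muln0.
by have := H j jS; rewrite !inE => /negbTE ->.
Qed.

Section Counts.
Variables (n : nat) (g : rel 'I_n) (nt : nat) (i : 'I_n).
Hypothesis gii : g i i = false.
Let Nc := ~: [set j | g i j].
Lemma iNc : i \in Nc. Proof. by rewrite !inE gii. Qed.
Lemma cardNc : #|Nc| = (n - deg g i)%N.
Proof. by rewrite /Nc cardsCs setCK card_ord /deg. Qed.
Lemma deg_lt : (deg g i < n)%N.
Proof.
have := cardsC [set j | g i j]; rewrite card_ord -/Nc /deg.
have : (0 < #|Nc|)%N by apply/card_gt0P; exists i; exact: iNc.
lia.
Qed.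

Lemma cnt1 k : #|[set S : {set 'I_n} | (#|S| == k.+1) && ffz S i]| = 'C(n.-1, k).
Proof.
rewrite -[n in 'C(n.-1, _)]card_ord -cardsT -(cnt_in k (in_setT i)).
by apply: eq_card => S; rewrite !inE ffunE subsetT.
Qed.

Lemma cnt0 k : #|[set S : {set 'I_n} | (#|S| == k) && ~~ ffz S i]| = 'C(n.-1, k).
Proof.
have h : #|[set: 'I_n] :\ i| = n.-1 by rewrite -[n in RHS]card_ord -cardsT (cardsD1 i [set: _]) in_setT.
rewrite -h -cards_draws; apply: eq_card => S; rewrite !inE ffunE andbC.
congr (_ && _); apply/idP/idP.
  move=> iS; apply/subsetP=> j jS; rewrite !inE andbT; apply: contraNneq iS => <-//.
by move/subsetP=> H; apply/negP=> /H; rewrite !inE eqxx.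
Qed.

Lemma cnt10 k : #|[set S : {set 'I_n} | (#|S| == k.+1) &&
    (ffz S i && ~~ exposure g (ffz S) i)]| = 'C((n - deg g i).-1, k).
Proof.
rewrite -cardNc -(cnt_in k iNc); apply: eq_card => S.
rewrite !inE ffunE expo negbK -/Nc. by case: (#|S| == _); case: (i \in S); case: (S \subset Nc).
Qed.

Lemma cnt00 k : #|[set S : {set 'I_n} | (#|S| == k) &&
    (~~ ffz S i && ~~ exposure g (ffz S) i)]| = 'C((n - deg g i).-1, k).
Proof.
have h : #|Nc :\ i| = (n - deg g i).-1 by rewrite -cardNc (cardsD1 i Nc) iNc.
rewrite -h -cards_draws; apply: eq_card => S; rewrite !inE ffunE expo negbK -/Nc.
have -> : (S \subset Nc :\ i) = (i \notin S) && (S \subset Nc).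
  apply/idP/idP.
    move=> sD; rewrite (subset_trans sD) ?subsetDl // andbT.
    by apply/negP=> /(subsetP sD); rewrite !inE eqxx.
  case/andP=> iS sN; apply/subsetP=> j jS; rewrite in_setD1 (subsetP sN) // andbT.
  by apply: contraNneq iS => <-.
by case: (#|S| == _); case: (i \in S); case: (S \subset Nc).
Qed.
End Counts.

Lemma sum_bool (R : nzRingType) (T : finType) (b : pred T) :
  (\sum_(i : T) (b i)%:R = (#|[set i | b i]|)%:R :> R)%R.
Proof.
rewrite -sum1_card natr_sum [RHS]big_mkcond /=; apply: eq_bigr => j _.
by rewrite inE; case: (b j).
Qed.

Local Open Scope ring_scope.

Lemma alg (R : fieldType) (a b c t N nt nc T C1 C0 a10 a00 B Bc Bc1 Z : R) :
 N != 0 -> nt != 0 -> nc != 0 -> T != 0 -> B != 0 ->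
 nt * T = N * C1 -> nc * T = N * C0 -> a10 * B = C1 * Bc -> a00 * B = C0 * Bc1 ->
 Bc = Bc1 + Z ->
 (((a+b+c+t)*C1 - (c+t)*a10)/nt - ((a+c)*C0 - c*a00)/nc)/T - N^-1 * b
  = - N^-1 * (c * (Z/B)) + N^-1 * (t * (1 - Bc/B)).
Proof.
move=> nN nnt nnc nT nB e1 e0 e10 e00 eZ.
have a10e : a10 = C1 * Bc / B by rewrite -e10 mulfK.
have a00e : a00 = C0 * Bc1 / B by rewrite -e00 mulfK.
have C1e : C1 = nt * T / N by rewrite e1; field.
have C0e : C0 = nc * T / N by rewrite e0; field.
rewrite a10e a00e C1e C0e eZ.
by field; rewrite nB nN nT nnc nnt.
Qed.

Unset Implicit Arguments.
Set Strict Implicit.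

Theorem proposition14 (R : realFieldType) (n : nat) (g : rel 'I_n)
  (al be ga th : 'I_n -> R) (nt : nat) :
  simple_graph g -> (1 <= nt)%N -> (nt <= n - 1)%N ->
  let nc := (n - nt)%N in
  crd_expect nt (beta_naive g al be ga th) - DTE al be ga th =
  - (n%:R)^-1 * \sum_i ga i * ((binomZ (nc - 1) ((deg g i)%:Z - 1))%:R
                                / ('C(n - 1, deg g i))%:R)
  + (n%:R)^-1 * \sum_i th i * (1 - ('C(nc, deg g i))%:R / ('C(n - 1, deg g i))%:R).
Proof.
move=> [_ gii] nt1 ntn nc.
have ncR : (nc%:R : R) = n%:R - nt%:R by rewrite natrB //; lia.
have Ebeta : forall z, z \in crd_support n nt -> beta_naive g al be ga th z =
   (\sum_i Yobs g al be ga th z i * (z i)%:R) / nt%:R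
   - (\sum_i Yobs g al be ga th z i * (1 - (z i)%:R)) / nc%:R.
  move=> z; rewrite inE => /eqP hz.
  rewrite /beta_naive sumrB sumr_const card_ord sum_bool hz ncR.
  done.
rewrite /crd_expect (eq_bigr _ Ebeta).
have Tc : (#|crd_support n nt|%:R : R) = 'C(n, nt)%:R.
  rewrite -[LHS]mul1r -sumr_const (sum_supp _ _ (fun _ => true)).
  rewrite mul1r; congr (_%:R).
  have := card_draws 'I_n nt; rewrite card_ord => <-.
  by apply: eq_card => S; rewrite !inE andbT.
have ntS : nt = nt.-1.+1 by lia.
have hA : forall i, \sum_(z in crd_support n nt) Yobs g al be ga th z i * (z i)%:R
   = (al i + be i + ga i + th i) * ('C(n.-1, nt.-1))%:R
     - (ga i + th i) * ('C((n - deg g i).-1, nt.-1))%:R.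
  move=> i.
  rewrite (eq_bigr (fun z : {ffun 'I_n -> bool} => (al i + be i + ga i + th i) * (z i)%:R
       - (ga i + th i) * (z i && ~~ exposure g z i)%:R)); last first.
    move=> z _; rewrite /Yobs /Ypot.
    by case: (z i); case: (exposure g z i); rewrite /= ?mulr1n ?mulr0n ?mulr1 ?mulr0 ?addr0 ?subr0 //; ring.
  rewrite sumrB -!mulr_sumr (sum_supp _ _ (fun z => z i))
     (sum_supp _ _ (fun z => z i && ~~ exposure g z i)).
  by rewrite ntS cnt1 cnt10.
have hB : forall i, \sum_(z in crd_support n nt) Yobs g al be ga th z i * (1 - (z i)%:R)
   = (al i + ga i) * ('C(n.-1, nt))%:R
     - ga i * ('C((n - deg g i).-1, nt))%:R.
  move=> i.
  rewrite (eq_bigr (fun z : {ffun 'I_n -> bool} => (al i + ga i) * (~~ z i)%:R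
       - ga i * (~~ z i && ~~ exposure g z i)%:R)); last first.
    move=> z _; rewrite /Yobs /Ypot.
    case: (z i); case: (exposure g z i); rewrite /= ?mulr1n ?mulr0n ?mulr1 ?mulr0 ?addr0 ?subr0. all: try ring.

  rewrite sumrB -!mulr_sumr (sum_supp _ _ (fun z => ~~ z i))
     (sum_supp _ _ (fun z => ~~ z i && ~~ exposure g z i)).
  by rewrite cnt0 cnt00.
have X1 : \sum_(z in crd_support n nt) \sum_i Yobs g al be ga th z i * (z i)%:R
  = \sum_i \sum_(z in crd_support n nt) Yobs g al be ga th z i * (z i)%:R.
  by rewrite exchange_big.
have X2 : \sum_(z in crd_support n nt) \sum_i Yobs g al be ga th z i * (1 - (z i)%:R)
  = \sum_i \sum_(z in crd_support n nt) Yobs g al be ga th z i * (1 - (z i)%:R).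
  by rewrite exchange_big.
rewrite sumrB -!mulr_suml X1 X2 (eq_bigr _ (fun i _ => hA i)) (eq_bigr _ (fun i _ => hB i)) Tc.
rewrite /DTE !mulr_suml -sumrB mulr_suml mulr_sumr -sumrB mulr_sumr mulr_sumr -big_split /=.
apply: eq_bigr => i _.
have -> : Ypot al be ga th i true false - Ypot al be ga th i false false = be i.
  by rewrite /Ypot /= ?mulr1n ?mulr0n ?mulr1 ?mulr0 ?addr0; ring.
have dl := deg_lt (gii i).
set d := deg g i in dl *.
have ncpos : (0 < nc)%N by rewrite /nc; lia.
apply: (@alg _ _ _ _ _ _ _ _ _ _ _ _ _ _ _ ('C(nc - 1, d))%:R).
- by rewrite pnatr_eq0; lia.
- by rewrite pnatr_eq0; lia.
- by rewrite pnatr_eq0; lia.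
- by rewrite pnatr_eq0 -lt0n bin_gt0; lia.
- by rewrite pnatr_eq0 -lt0n bin_gt0; lia.
- by rewrite -!natrM; congr (_%:R); rewrite mul_bin_diag -ntS.
- by rewrite -!natrM; congr (_%:R); rewrite mul_bin_down.
- rewrite -!natrM; congr (_%:R).
  have := trin (n - 1) d nt.-1.
  have -> : (n - 1 - nt.-1 = nc)%N by rewrite /nc; lia.
  have -> : (n - 1 - d = (n - d).-1)%N by lia.
  have -> : (n - 1 = n.-1)%N by lia.
  by rewrite mulnC.
- rewrite -!natrM; congr (_%:R).
  have := trin (n - 1) d nt.
  have -> : (n - 1 - nt = nc - 1)%N by rewrite /nc; lia.
  have -> : (n - 1 - d = (n - d).-1)%N by lia.
  have -> : (n - 1 = n.-1)%N by lia.
  by rewrite mulnC.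
- rewrite -natrD; congr (_%:R).
  have -> : nc = (nc - 1).+1 by lia.
  rewrite subSS subn0.
  case: (d) => [|d'] /=.
    by rewrite !bin0.
  by rewrite subSS subn0 binS.
Qed.
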